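(* If $W=\langle w_1,\ldots,w_n\rangle$ is a weave, then the subtournaments $W-\{w_1,w_2\},\ W-\{w_2,w_3\},\ \ldots,\ W-\{w_{n-1},w_n\}$ are all isomorphic to each other. Furthermore, for any $i,j$ there is an isomorphism $\phi$ from $W-\{w_i,w_{i+1}\}$ to $W-\{w_j,w_{j+1}\}$ such that whenever $\phi(w_k)=w_\ell$, the integers $k$ and $\ell$ have the same parity.
   Context: A tournament is a finite, non-null, loopless directed graph in which for any two distinct vertices $u,v$ there is exactly one edge with both ends in $\{u,v\}$; write $u\to v$ for the edge from $u$ to $v$. $W-X$ denotes the subtournament induced on $V(W)\setminus X$. A weave $\langle w_1,\dots,w_n\rangle$ is a tournament on $w_1,\dots,w_n$ such that: $w_i\to w_j$ whenever $i<j$ and $i,j$ have opposite parity; either $w_i\to w_j$ for all $i<j$ both odd, or $w_j\to w_i$ for all $i<j$ both odd; and either $w_i\to w_j$ for all $i<j$ both even, or $w_j\to w_i$ for all $i<j$ both even. *)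

(* Defs.v *)
From mathcomp Require Import all_boot.
Set Implicit Arguments. Unset Strict Implicit. Unset Printing Implicit Defensive.

Definition is_tournament (T : finType) (e : rel T) : Prop :=
  (forall u, ~~ e u u) /\
  (forall u v, u != v -> (e u v (+) e v u)).

(* A weave <w_1,...,w_n>, with w_i represented by the ordinal i-1 : 'I_n.
   (0-based indexing preserves "same/opposite parity" and maps the class of
   odd indices to the class of even ones; the definition is symmetric in the
   two classes.) *)
Definition is_weave (n : nat) (e : rel 'I_n) : Prop :=
  is_tournament e /\
  (forall i j : 'I_n, i < j -> odd i != odd j -> e i j) /\
  ((forall i j : 'I_n, i < j -> ~~ odd i -> ~~ odd j -> e i j) \/
   (forall i j : 'I_n, i < j -> ~~ odd i -> ~~ odd j -> e j i)) /\
  ((forall i j : 'I_n, i < j -> odd i -> odd j -> e i j) \/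
   (forall i j : 'I_n, i < j -> odd i -> odd j -> e j i)).

Definition sub_iso (T : finType) (e : rel T) (A B : {set T}) (phi : T -> T)
  : Prop :=
  {in A, injective phi} /\ phi @: A = B /\
  {in A &, forall x y, e x y = e (phi x) (phi y)}.

Definition del_pair (n : nat) (i : nat) : {set 'I_n} :=
  [set k : 'I_n | (val k != i) && (val k != i.+1)].

(* Main.v *)
Require Import Defs.
From mathcomp Require Import all_boot.
From mathcomp Require Import zify.

Definition sh (i j k : nat) : nat :=
  if k == i then j else if k == i.+1 then j.+1 else
  if i <= j then (if (i.+2 <= k) && (k <= j.+1) then k - 2 else k)
  else (if (j <= k) && (k < i) then k + 2 else k).

Lemma sh_lt n i j k : i.+1 < n -> j.+1 < n -> k < n -> sh i j k < n.
Proof. rewrite /sh => *; repeat (case: ifP => /= ?); lia. Qed.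

Lemma sh_out i j k : k != i -> k != i.+1 ->
  (sh i j k != j) && (sh i j k != j.+1).
Proof. rewrite /sh => *; repeat (case: ifP => /= ?); lia. Qed.

Lemma sh_inv i j k : sh j i (sh i j k) = k.
Proof.
rewrite /sh => *; repeat (case: ifP => /= ?);
  repeat match goal with H : context [if _ then _ else _] |- _ => revert H end;
  repeat (case: ifP => /= ?); lia.
Qed.

Lemma sh_odd i j k : k != i -> k != i.+1 -> odd (sh i j k) = odd k.
Proof.
rewrite /sh => /negbTE -> /negbTE ->; case: ifP => ?; case: ifP => /andP; try case => ? ?; try done.
  by rewrite oddB ?addbF //; lia.
by rewrite oddD addbF.
Qed.

Lemma sh_mono i j k l : k != i -> k != i.+1 -> l != i -> l != i.+1 -> k < l ->
  sh i j k < sh i j l.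
Proof.
rewrite /sh => *; repeat (case: ifP => /= ?); lia.
Qed.

Lemma weave_edge n (e : rel 'I_n) : is_weave e ->
  forall x y x' y' : 'I_n, x < y -> x' < y' -> odd x = odd x' -> odd y = odd y' ->
  e x y = e x' y'.
Proof.
case=> [[irr tot] [H1 [H2 H3]]] x y x' y' lxy lxy' ox oy.
have nxy : x != y by rewrite neq_ltn lxy.
have nxy' : x' != y' by rewrite neq_ltn lxy'.
have T1 := tot _ _ nxy; have T2 := tot _ _ nxy'.
case: (boolP (odd x == odd y)) => hxy; last first.
  by rewrite !H1 // -ox -oy.
move/eqP: hxy => hxy.
case ex: (odd x).
- have oy' : odd y by rewrite -hxy.
  have ox' : odd x' by rewrite -ox.
  have oy'' : odd y' by rewrite -oy.
  case: H3 => H3.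
    by rewrite !H3.
  move: T1 T2; rewrite (H3 _ _ lxy) // (H3 _ _ lxy') //.
  by case: (e x y); case: (e x' y').
- have oy' : ~~ odd y by rewrite -hxy ex.
  have ox' : ~~ odd x' by rewrite -ox ex.
  have oy'' : ~~ odd y' by rewrite -oy.
  have ex' : ~~ odd x by rewrite ex.
  case: H2 => H2.
    by rewrite !H2.
  move: T1 T2; rewrite (H2 _ _ lxy) // (H2 _ _ lxy') //.
  by case: (e x y); case: (e x' y').
Qed.

Lemma main_iso n (e : rel 'I_n) i j : is_weave e -> i.+1 < n -> j.+1 < n ->
  exists phi : 'I_n -> 'I_n,
       sub_iso e (del_pair n i) (del_pair n j) phi /\
       {in del_pair n i, forall k, odd (phi k) = odd k}.
Proof.
move=> W hi hj.
pose phi (k : 'I_n) : 'I_n := insubd k (sh i j k).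
have vphi : forall k, k \in del_pair n i -> val (phi k) = sh i j k.
  move=> k _.
  by rewrite /phi val_insubd sh_lt.
have inA : forall k : 'I_n, k \in del_pair n i -> (val k != i) && (val k != i.+1).
  by move=> k; rewrite inE.
exists phi; split; last by move=> k kA; rewrite vphi // sh_odd //; case/andP: (inA _ kA).
have mono : {in del_pair n i &, forall x y : 'I_n, x < y -> phi x < phi y}.
  move=> x y xA yA lxy; rewrite !vphi //.
  by case/andP: (inA _ xA) => ? ?; case/andP: (inA _ yA) => ? ?; apply: sh_mono.
have inj : {in del_pair n i &, injective phi}.
  move=> x y xA yA h; case: (ltngtP x y) => lxy; last exact: val_inj.
    by have := mono _ _ xA yA lxy; rewrite h ltnn.
  by have := mono _ _ yA xA lxy; rewrite h ltnn.
split.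
  move=> x xA y h; apply: val_inj.
  have : val (phi x) = val (phi y) by rewrite h.
  rewrite /phi !val_insubd !sh_lt // => /(congr1 (sh j i)).
  by rewrite !sh_inv.
split.
  apply/setP => b; apply/imsetP/idP.
    case=> k kA ->; rewrite inE vphi //.
    by case/andP: (inA _ kA) => ? ?; apply: sh_out.
  rewrite inE => /andP [b1 b2].
  have lt : sh j i b < n by apply: sh_lt.
  have kA : (Ordinal lt) \in del_pair n i by rewrite inE; apply: sh_out.
  exists (Ordinal lt) => //; apply: val_inj; rewrite vphi //=.
  by rewrite sh_inv.
move=> x y xA yA.
have ox : odd x = odd (phi x).
  by rewrite vphi // sh_odd //; case/andP: (inA _ xA).
have oy : odd y = odd (phi y).
  by rewrite vphi // sh_odd //; case/andP: (inA _ yA).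
have T : forall a b : 'I_n, b < a -> a != b by move=> a b h; rewrite neq_ltn h orbT.
case: (ltngtP x y) => lxy.
- exact: (@weave_edge _ _ W _ _ _ _ lxy (mono _ _ xA yA lxy) ox oy).
- have ly := mono _ _ yA xA lxy.
  have E := @weave_edge _ _ W _ _ _ _ lxy ly oy ox.
  case: W => [[irr tot] rest].
  have h1 := tot _ _ (T _ _ lxy).
  have h2 := tot _ _ (T _ _ ly).
  move: h1 h2; rewrite E.
  by case: (e x y); case: (e (phi x) (phi y)); case: (e (phi y) (phi x)).
- have Exy : x = y by apply: val_inj; exact: lxy.
  by case: W => [[irr _] _]; rewrite Exy !(negbTE (irr _)).
Qed.

Theorem corollary3p5 (n : nat) (e : rel 'I_n) :
  is_weave e ->
  (forall i j : nat, i.+1 < n -> j.+1 < n ->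
     exists phi : 'I_n -> 'I_n, sub_iso e (del_pair n i) (del_pair n j) phi) /\
  (forall i j : nat, i.+1 < n -> j.+1 < n ->
     exists phi : 'I_n -> 'I_n,
       sub_iso e (del_pair n i) (del_pair n j) phi /\
       {in del_pair n i, forall k, odd (phi k) = odd k}).
Proof.
move=> W; split=> i j hi hj; last exact: (@main_iso _ _ _ _ W).
by have [phi [H _]] := @main_iso _ _ _ _ W hi hj; exists phi.
Qed.
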